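(* Let $q$ be a prime power, $m\ge2$, $s,\ell,r_1,\dots,r_m\ge1$ integers, $k=m\ell-s$ with $k\ge\ell$, $n=\sum_{i=1}^m(\ell+r_i)$, $R=\sum_i r_i$. For $\alpha=(\alpha_{w,z})\in\mathbb{F}_q^{sk}$ and $\beta=(\beta_{t,i,j})\in\mathbb{F}_q^{\ell R}$ ($1\le w\le k$, $1\le z\le s$, $1\le t\le\ell$, $1\le i\le m$, $1\le j\le r_i$) let $G(\alpha,\beta)=(C_1\mid D_1\mid\dots\mid C_m\mid D_m)\in\mathbb{F}_q^{k\times n}$, where $(C_1\mid\dots\mid C_m)=[I_k\mid A]$ with $A=(\alpha_{w,z})\in\mathbb{F}_q^{k\times s}$, each $C_i$ has $\ell$ columns, and $D_i\in\mathbb{F}_q^{k\times r_i}$ has $j$-th column $\sum_{t=1}^\ell\beta_{t,i,j}C_i^{(t)}$, $C_i^{(t)}$ being the $t$-th column of $C_i$. If the entries of $\alpha$ and $\beta$ are chosen independently and uniformly at random in $\mathbb{F}_q$, then the probability that the row space of $G(\alpha,\beta)$ is an $[n,k,\ell;r_1,\dots,r_m]$-PMDS code is at least $$1-\frac{2(n-k)\binom{n-1}{k-1}}{q}.$$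
   Context: An $[n,k]$-MDS code over a field $\mathbb{F}$ is a linear code in $\mathbb{F}^n$ of dimension $k$ and minimum Hamming distance $n-k+1$. PMDS codes: let $\ell,m,r_1,\dots,r_m$ be positive integers, $n=\sum_{i=1}^m(r_i+\ell)$, and $C\subseteq\mathbb{F}^n$ a linear code of dimension $k<n$ with generator matrix $G=(B_1\mid\dots\mid B_m)$, $B_i\in\mathbb{F}^{k\times(r_i+\ell)}$ (here $B_i=(C_i\mid D_i)$). Then $C$ is an $[n,k,\ell;r_1,\dots,r_m]$-PMDS code if (i) for each $i$ the row space of $B_i$ is an $[r_i+\ell,\ell]$-MDS code, and (ii) for any choice of $r_i$ erased coordinates in the $i$-th block for every $i$, the code obtained from $C$ by puncturing these coordinates is an $[m\ell,k]$-MDS code. *)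

(* Defs.v *)
From mathcomp Require Import all_boot all_algebra.
Set Implicit Arguments. Unset Strict Implicit. Unset Printing Implicit Defensive.
Import GRing.Theory Num.Theory.
Local Open Scope ring_scope.

Section Codes.
Variable F : finFieldType.

Definition wt N (v : 'rV[F]_N) : nat := #|[set j : 'I_N | v 0 j != 0]|.

Definition has_min_dist k N (M : 'M[F]_(k, N)) (d : nat) : bool :=
  [exists u : 'rV[F]_k, (u *m M != 0) && (wt (u *m M) == d)] &&
  [forall u : 'rV[F]_k, (u *m M != 0) ==> (d <= wt (u *m M))%N].

Definition is_MDS k N (M : 'M[F]_(k, N)) (d : nat) : bool :=
  (\rank M == d) && has_min_dist M (N - d + 1).

(* Restriction of M to the columns in S (i.e. puncturing the complement),
   columns kept in increasing order. *)
Definition colsub_set k N (S : {set 'I_N}) (M : 'M[F]_(k, N)) : 'M[F]_(k, #|S|) :=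
  colsub (fun j : 'I_#|S| => enum_val j) M.

End Codes.

Definition boff m l (r : 'I_m -> nat) (i : 'I_m) : nat :=
  (\sum_(i' < m | (i' < i)%N) (l + r i'))%N.

Definition block n m l (r : 'I_m -> nat) (i : 'I_m) : {set 'I_n} :=
  [set j : 'I_n | (boff l r i <= j < boff l r i + (l + r i))%N].

Definition is_PMDS (F : finFieldType) k n m l (r : 'I_m -> nat)
    (G : 'M[F]_(k, n)) : bool :=
  [&& n == (\sum_(i < m) (l + r i))%N, (k < n)%N, \rank G == k,
      [forall i : 'I_m, is_MDS (colsub_set (block n l r i) G) l] &
      [forall E : {set 'I_n},
         [forall i : 'I_m, #|E :&: block n l r i| == r i] ==>
         is_MDS (colsub_set (~: E) G) k]].

(* Entry w of the t-th column (0-indexed) of C_i, i.e. column i*l+t of [I_k | A]. *)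
Definition Ccol (F : finFieldType) k s l (alpha : {ffun 'I_k * 'I_s -> F})
    (i t : nat) (w : 'I_k) : F :=
  let c := (i * l + t)%N in
  if (c < k)%N then ((w : nat) == c)%:R
  else if insub (c - k)%N is Some z then alpha (w, z) else 0.

Definition Gmat (F : finFieldType) k s n m l (r : 'I_m -> nat)
    (alpha : {ffun 'I_k * 'I_s -> F})
    (beta : {ffun 'I_l * {i : 'I_m & 'I_(r i)} -> F}) : 'M[F]_(k, n) :=
  \matrix_(w < k, j < n)
    match [pick i : 'I_m | j \in block n l r i] with
    | Some i =>
        let c := (j - boff l r i)%N in
        if (c < l)%N then @Ccol F k s l alpha i c w
        else \sum_(t < l)
               (if @insub _ (fun x => x < r i)%N 'I_(r i) (c - l)%N is Some jj
                then beta (t, @Tagged 'I_m i (fun i => 'I_(r i)) jj) else 0)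
               * @Ccol F k s l alpha i t w
    | None => 0
    end.

Definition prob (T : finType) (P : pred T) : rat :=
  (#|[set x : T | P x]|%:R / #|T|%:R)%R.

(* Main.v *)
Require Import Defs.
From mathcomp Require Import all_boot all_algebra.
From mathcomp Require Import zify.
Set Implicit Arguments. Unset Strict Implicit. Unset Printing Implicit Defensive.
Import GRing.Theory Num.Theory.
Local Open Scope ring_scope.
Section Gen.
Variable F : finFieldType.
Local Open Scope ring_scope.

Lemma fresh_count (T : finType) p (get : T -> {ffun 'I_p -> F})
  (upd : T -> {ffun 'I_p -> F} -> T) (h : T -> {ffun 'I_p -> F}) :
  (forall a y, get (upd a y) = y) -> (forall a, upd a (get a) = a) ->
  (forall a y y', upd (upd a y) y' = upd a y') -> (forall a y, h (upd a y) = h a) ->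
  (#|[set a | ([exists t, h a t != 0] && (\sum_t get a t * h a t == 0))%R]| * #|F| <= #|T|)%N.
Proof.
move=> gu ug uu hu.
set A := [set a | _].
pose sh (a : T) (t : 'I_p) (x : F) : {ffun 'I_p -> F} :=
  [ffun t' => get a t' + (if t' == t then x else 0)].
pose t0 (v : {ffun 'I_p -> F}) := [pick t | v t != 0].
pose Phi (ax : T * F) : T :=
  match t0 (h ax.1) with
  | Some t => upd ax.1 (sh ax.1 t ax.2)
  | None => ax.1 end.
have -> : (#|A| * #|F| = #|setX A [set: F]|)%N by rewrite cardsX cardsT.
rewrite -(card_in_imset (f := Phi)); first exact: max_card.
move=> [a x] [b y]; rewrite !inE /= !andbT => Ha Hb.
move: Ha Hb => /andP[ha0 sa] /andP[hb0 sb].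
rewrite /Phi /=.
have hab : forall t, h (upd a (sh a t x)) = h a by move=> t; rewrite hu.
case E0 : (t0 (h a)) => [t|]; last first.
  exfalso; move/existsP: ha0 => [t Ht]; move: E0; rewrite /t0.
  by case: pickP => // H _; move: (H t); rewrite Ht.
have ht : h a t != 0 by move: E0; rewrite /t0; case: pickP => // u hu1 [<-].
case E1 : (t0 (h b)) => [t'|]; last first.
  exfalso; move/existsP: hb0 => [t1 Ht]; move: E1; rewrite /t0.
  by case: pickP => // H _; move: (H t1); rewrite Ht.
move=> E.
have hab' : h a = h b by rewrite -(hu a (sh a t x)) E hu.
have tt' : t = t' by move: E1; rewrite -hab' E0 => -[].
subst t'.
have sum_sh : forall c z, \sum_t1 get (upd c (sh c t z)) t1 * h c t1 = \sum_t1 get c t1 * h c t1 + z * h c t.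
  move=> c z; rewrite gu.
  under eq_bigr do rewrite ffunE mulrDl.
  rewrite big_split /=; congr (_ + _).
  rewrite (bigD1 t) //= eqxx big1 ?addr0 // => i /negbTE ->; by rewrite mul0r.
have xy : x = y.
  have := congr1 (fun c => \sum_t1 get c t1 * h c t1) E => /=.
  rewrite !hu.
  rewrite (sum_sh a x) (sum_sh b y) (eqP sa) (eqP sb) !add0r => /eqP.
  rewrite -hab' -subr_eq0 -mulrBl mulf_eq0 (negbTE ht) orbF subr_eq0.
  by move/eqP.
subst y.
have gab : get a = get b.
  have := congr1 get E; rewrite !gu => /ffunP H; apply/ffunP => t1.
  by move: (H t1); rewrite !ffunE => /addIr.
by rewrite -(ug a) -(ug b) -gab -(uu a (sh a t x) (get a)) E uu.
Qed.
End Gen.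
Section DetLin.
Variable F : fieldType.
Local Open Scope ring_scope.

Definition setcol k (A : 'M[F]_k) (j : 'I_k) (v : 'I_k -> F) : 'M[F]_k :=
  \matrix_(i, j') if j' == j then v i else A i j'.

Lemma cofactor_setcol k (A : 'M[F]_k) j v i : cofactor (setcol A j v) i j = cofactor A i j.
Proof.
rewrite /cofactor; congr (_ * _); congr (\det _).
apply/matrixP => a b; rewrite !mxE.
by rewrite eq_sym (negbTE (neq_lift j b)).
Qed.

Lemma det_col_lin k (A : 'M[F]_k) (j : 'I_k) p (y : 'I_p -> F) (g : 'I_p -> 'I_k -> F) :
  (forall i, A i j = \sum_t y t * g t i) ->
  \det A = \sum_t y t * \det (setcol A j (g t)).
Proof.
move=> HA; rewrite (expand_det_col A j).
under eq_bigr do rewrite HA big_distrl /=.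
rewrite exchange_big /=; apply: eq_bigr => t _.
rewrite (expand_det_col (setcol A j (g t)) j) big_distrr /=; apply: eq_bigr => i _.
rewrite cofactor_setcol.
by rewrite /setcol mxE eqxx -mulrA.
Qed.
End DetLin.
Lemma pigeon (X Y : finType) (A : {set Y}) (f : X -> Y) :
  injective f -> (forall x, f x \in A) -> (#|X| <= #|A|)%N.
Proof.
move=> fi fA; rewrite -(card_imset _ fi); apply: subset_leq_card.
by apply/subsetP => y /imsetP [x _ ->].
Qed.

Lemma card_union_le (T : finType) (A B C : {set T}) :
  A \subset B :|: C -> (#|A| <= #|B| + #|C|)%N.
Proof.
move=> H; apply: leq_trans (subset_leq_card H) _.
by rewrite cardsU leq_subr.
Qed.

Section Desc.
Variable F : finFieldType.
Variables (m s l k : nat) (r : 'I_m -> nat).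
Hypothesis Hl : (0 < l)%N.
Hypothesis Hks : (k + s = m * l)%N.
Local Open Scope ring_scope.

Local Notation Key := {i : 'I_m & 'I_(r i)}.
Local Notation AT := {ffun 'I_k * 'I_s -> F}.
Local Notation BT := {ffun 'I_l * Key -> F}.
Local Notation TT := (AT * BT)%type.

Definition cv (al : AT) (c : nat) (w : 'I_k) : F :=
  if (c < k)%N then ((w : nat) == c)%:R
  else if insub (c - k)%N is Some z then al (w, z) else 0.

Local Notation Desc := (nat + Key)%type.

Definition colv (d : Desc) (ab : TT) (w : 'I_k) : F :=
  match d with
  | inl c => cv ab.1 c w
  | inr K => \sum_(t < l) ab.2 (t, K) * cv ab.1 (tag K * l + t) w
  end.

Definition MD (D : 'I_k -> Desc) (ab : TT) : 'M[F]_k := \matrix_(w, x) colv (D x) ab w.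

Definition Dupd (D : 'I_k -> Desc) x d := fun y => if y == x then d else D y.

Definition bad (D : 'I_k -> Desc) := [set ab : TT | \det (MD D ab) == 0].

Lemma MD_ext D D' ab : D =1 D' -> MD D ab = MD D' ab.
Proof. by move=> E; apply/matrixP => w x; rewrite !mxE E. Qed.

Lemma bad_ext D D' : D =1 D' -> bad D = bad D'.
Proof. by move=> E; apply/setP => ab; rewrite !inE (MD_ext _ E). Qed.

Lemma MD_upd D x d ab : MD (Dupd D x d) ab = setcol (MD D ab) x (colv d ab).
Proof.
apply/matrixP => w y; rewrite /setcol !mxE /Dupd.
by case: eqP.
Qed.

Lemma step D x p (get : TT -> {ffun 'I_p -> F}) (upd : TT -> {ffun 'I_p -> F} -> TT)
   (e : 'I_p -> Desc) (t0 : 'I_p) :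
  (forall a y, get (upd a y) = y) -> (forall a, upd a (get a) = a) ->
  (forall a y y', upd (upd a y) y' = upd a y') ->
  (forall ab w, colv (D x) ab w = \sum_t get ab t * colv (e t) ab w) ->
  (forall ab y t, \det (MD (Dupd D x (e t)) (upd ab y)) = \det (MD (Dupd D x (e t)) ab)) ->
  (#|bad D| * #|F| <= #|bad (Dupd D x (e t0))| * #|F| + #|{: TT}|)%N.
Proof.
move=> gu ug uu Hcol Hinv.
pose h (ab : TT) : {ffun 'I_p -> F} := [ffun t => \det (MD (Dupd D x (e t)) ab)].
have Hfc := @fresh_count F TT p get upd h gu ug uu.
have Hh : forall a y, h (upd a y) = h a by move=> a y; apply/ffunP => t; rewrite !ffunE Hinv.
move: (Hfc Hh) => {}Hfc.
apply: (leq_trans _ (leq_add (leqnn _) Hfc)); rewrite -mulnDl leq_mul2r; apply/orP; right.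
apply: card_union_le; apply/subsetP => ab; rewrite !inE => /eqP H0.
have Hdet : \det (MD D ab) = \sum_t get ab t * h ab t.
  rewrite (@det_col_lin _ _ _ x p (get ab) (fun t => colv (e t) ab)).
    by apply: eq_bigr => t _; rewrite ffunE MD_upd.
  by move=> i; rewrite mxE Hcol.
case: (boolP (h ab t0 == 0)) => [/eqP|] Ht0.
  by rewrite -(ffunE (fun t => \det (MD (Dupd D x (e t)) ab))) -/(h ab) Ht0 eqxx.
apply/orP; right; rewrite -Hdet H0 eqxx andbT.
by apply/existsP; exists t0.
Qed.

Lemma cv_id (al : AT) (c : 'I_k) w : cv al c w = ((w : nat) == c)%:R.
Proof. by rewrite /cv ltn_ord. Qed.

Lemma det_id (D : 'I_k -> nat) ab :
  injective D -> (forall x, D x < k)%N -> \det (MD (fun x => inl (D x)) ab) != 0.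
Proof.
move=> Di Dk.
pose B : 'M[F]_k := \matrix_(x, w) ((D x == w :> nat)%:R).
have BM : B *m MD (fun x => inl (D x)) ab = 1%:M.
  apply/matrixP => x y; rewrite !mxE.
  rewrite (bigD1 (Ordinal (Dk x))) //= big1 ?addr0.
    rewrite !mxE /= eqxx mul1r /colv /cv Dk /=.
    by case: eqP => [/Di ->|Hne]; rewrite ?eqxx // eq_sym; case: eqP => // E; case: Hne; rewrite E.
  move=> w Hw; rewrite !mxE; case: eqP => [E|]; last by rewrite mul0r.
  by exfalso; move: Hw; apply/negP/negPn/eqP; apply: val_inj; rewrite /= E.
have := congr1 determinant BM; rewrite det_mulmx det1 => H.
by apply/eqP => H0; move: H; rewrite H0 mulr0 => /eqP; rewrite eq_sym oner_eq0.
Qed.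

Lemma exists_free_id (D : 'I_k -> nat) x :
  injective D -> (k <= D x)%N -> exists w : 'I_k, forall y, D y != w.
Proof.
move=> Di Dx.
case: (boolP [exists w : 'I_k, [forall y, D y != w]]) => [/existsP [w /forallP Hw]|H].
  by exists w.
exfalso.
have Hall : forall w : 'I_k, exists y, D y == w.
  move=> w; move/negP: H => H.
  case: (boolP [exists y, D y == w]) => [/existsP //|/negP H2].
  by exfalso; apply: H; apply/existsP; exists w; apply/forallP => y; apply/negP => E; apply: H2; apply/existsP; exists y.
pose pre (w : 'I_k) := odflt x [pick y | D y == w].
have preE : forall w, D (pre w) = w.
  move=> w; rewrite /pre; case: pickP => [y /eqP //|H0].
  by exfalso; case: (Hall w) => y Hy; move: (H0 y); rewrite Hy.
have : (#|'I_k| <= #|[set~ x]|)%N.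
  apply: (@pigeon _ _ _ pre).
    by move=> w1 w2 E; apply: val_inj; rewrite /= -(preE w1) -(preE w2) E.
  move=> w; rewrite !inE; apply/eqP => E; move: (preE w); rewrite E => E2.
  by move: Dx; rewrite E2 leqNgt ltn_ord.
rewrite cardsC1 !card_ord; have := ltn_ord x; lia.
Qed.

Lemma lemmaA N : forall D : 'I_k -> nat, injective D -> (forall x, D x < k + s)%N ->
  (\sum_x (k <= D x) = N)%N ->
  (#|bad (fun x => inl (D x))| * #|F| <= N * #|{: TT}|)%N.
Proof.
elim: N => [|N IH] D Di Db HN.
  have Dk : forall x, (D x < k)%N.
    move=> x; rewrite ltnNge; apply/negP => H.
    by move: HN; rewrite (bigD1 x) //= H.
  rewrite mul0n leqn0 muln_eq0; apply/orP; left.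
  rewrite cards_eq0; apply/eqP/setP => ab; rewrite !inE.
  by apply/negbTE/det_id.
have [x Hx] : exists x, (k <= D x)%N.
  case: (boolP [exists x, (k <= D x)%N]) => [/existsP //|/negP H]; exfalso.
  move: HN; rewrite big1 // => y _; case: leqP => // Hy; exfalso; apply: H.
  by apply/existsP; exists y.
have Hz : (D x - k < s)%N by move: (Db x) => H; rewrite ltn_subLR.
pose z := Ordinal Hz.
have [w Hw] := exists_free_id Di Hx.
pose D' := fun y => if y == x then (w : nat) else D y.
have D'i : injective D'.
  move=> y1 y2; rewrite /D'; case: eqP => [->|H1]; case: eqP => [->|H2] //.
  - by move=> E; move: (Hw y2); rewrite E eqxx.
  - by move=> E; move: (Hw y1); rewrite -E eqxx.
  - exact: Di.
have D'b : forall y, (D' y < k + s)%N by move=> y; rewrite /D'; case: eqP => _ //; apply: ltn_addr.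
have HN' : (\sum_y (k <= D' y) = N)%N.
  move: HN; rewrite (bigD1 x) //= Hx add1n => -[<-].
  rewrite (bigD1 x) //= /D' eqxx leqNgt ltn_ord add0n.
  by apply: eq_bigr => y /negbTE ->.
have := IH D' D'i D'b HN'.
have E1 : bad (fun y => inl (D' y)) = bad (Dupd (fun y => inl (D y)) x ((fun w' : 'I_k => inl (w' : nat)) w)).
  by apply: bad_ext => y; rewrite /D' /Dupd; case: eqP.
rewrite E1 => IH'.
pose get (ab : TT) : {ffun 'I_k -> F} := [ffun w' => ab.1 (w', z)].
pose upd (ab : TT) (y : {ffun 'I_k -> F}) : TT :=
  ([ffun pr => if pr.2 == z then y pr.1 else ab.1 pr], ab.2).
have := @step (fun y => inl (D y)) x k get upd (fun w' => inl (w' : nat)) w.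
rewrite mulSn addnC; move=> St; apply: leq_trans (St _ _ _ _ _) _.
- by move=> a y; apply/ffunP => w'; rewrite !ffunE eqxx.
- by move=> [a b]; congr (_, _); apply/ffunP => -[w' z']; rewrite ffunE /=; case: eqP => [->|]; rewrite ?ffunE.
- by move=> a y y'; rewrite /upd /=; congr (_, _); apply/ffunP => pr; rewrite !ffunE; case: eqP.
- move=> ab w0; rewrite /colv /cv.
  rewrite leqNgt in Hx; rewrite (negbTE Hx).
  have -> : insub (D x - k)%N = Some z by rewrite insubT.
  rewrite (bigD1 w0) //= big1 ?addr0 ?ltn_ord ?eqxx ?mulr1 ?ffunE //.
  by move=> w' Hw'; rewrite ltn_ord; case: eqP => [E|]; rewrite ?mulr0 //; case/eqP: Hw'; apply: val_inj.
- move=> ab y t; congr (\det _); apply/matrixP => i j; rewrite !mxE /Dupd.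
  case: eqP => [_|Hjx]; first by rewrite /colv !cv_id.
  rewrite /colv /cv; case: ltnP => // Hj.
  case: insubP => // z' _ Ez'; rewrite ffunE /=.
  case: eqP => // Ezz; exfalso; apply: Hjx; apply: Di.
  have Ez : val z = (D x - k)%N by [].
  move: Ez'; rewrite Ezz Ez; lia.
- by rewrite leq_add2l.
Qed.
Definition blk (d : Desc) : nat := match d with inl c => (c %/ l)%N | inr K => tag K end.
Definition cost (d : Desc) : nat := match d with inl c => (k <= c)%N | inr _ => 2%N end.
Definition isr (d : Desc) : bool := match d with inr _ => true | _ => false end.

Lemma blk_inl (i t : nat) : (t < l)%N -> blk (inl (i * l + t)) = i.
Proof. by move=> Ht; rewrite /= divnMDl // divn_small // addn0. Qed.

Lemma lemmaB N : forall D : 'I_k -> Desc, injective D ->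
  (forall x c, D x = inl c -> (c < k + s)%N) ->
  (forall i, #|[set y | blk (D y) == i]| <= l)%N ->
  #|[set y | isr (D y)]| = N ->
  (#|bad D| * #|F| <= (\sum_y cost (D y)) * #|{: TT}|)%N.
Proof.
elim: N => [|N IH] D Di Dwf Dv HN.
  pose D0 y := match D y with inl c => c | inr _ => 0%N end.
  have E : D =1 (fun y => inl (D0 y)).
    move=> y; rewrite /D0; case E: (D y) => [c|K] //.
    by move: HN => /eqP; rewrite cards_eq0 => /eqP/setP/(_ y); rewrite !inE E.
  rewrite (bad_ext E).
  have -> : (\sum_y cost (D y) = \sum_y (k <= D0 y))%N by apply: eq_bigr => y _; rewrite E.
  apply: lemmaA => //.
  - by move=> y1 y2 H; apply: Di; rewrite !E H.
  - by move=> y; apply: (Dwf y); rewrite E.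
have [x Hx] : exists x, isr (D x).
  case: (pickP [pred y | isr (D y)]) => [y Hy|H0]; first by exists y.
  by move: HN; rewrite (eq_card0 (A := [set y | isr (D y)])) // => y; rewrite inE; move: (H0 y).
case EK: (D x) Hx => [//|K] _.
pose i := tag K.
have [t0 Ht0] : exists t0 : 'I_l, forall y, D y != inl (i * l + t0)%N.
  case: (boolP [exists t : 'I_l, [forall y, D y != inl (i * l + t)%N]]) => [/existsP [t /forallP Ht]|H].
    by exists t.
  exfalso.
  have Hall : forall t : 'I_l, exists y, D y == inl (i * l + t)%N.
    move=> t; move/negP: H => H.
    case: (boolP [exists y, D y == inl (i * l + t)%N]) => [/existsP //|/negP H2].
    by exfalso; apply: H; apply/existsP; exists t; apply/forallP => y; apply/negP => E; apply: H2; apply/existsP; exists y.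
  pose pre (t : 'I_l) := odflt x [pick y | D y == inl (i * l + t)%N].
  have preE : forall t, D (pre t) = inl (i * l + t)%N.
    move=> t; rewrite /pre; case: pickP => [y /eqP //|H0].
    by exfalso; case: (Hall t) => y Hy; move: (H0 y); rewrite Hy.
  have : (#|'I_l| <= #|[set y | blk (D y) == i] :\ x|)%N.
    apply: (@pigeon _ _ _ pre).
      move=> t1 t2 E; apply: val_inj => /=.
      by move: (preE t1) (preE t2); rewrite E => -> [] /eqP; rewrite eqn_add2l => /eqP.
    move=> t; rewrite !inE preE blk_inl // eqxx andbT.
    by apply/eqP => E; move: (preE t); rewrite E EK.
  have := Dv i; rewrite (cardsD1 x) !inE EK eqxx card_ord; lia.
have Hit : (i * l + t0 < k + s)%N.
  rewrite Hks; have := leq_mul (ltn_ord i) (leqnn l); rewrite mulSn; have := ltn_ord t0; lia.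
pose D' := Dupd D x (inl (i * l + t0)%N).
have D'i : injective D'.
  move=> y1 y2; rewrite /D' /Dupd; case: eqP => [->|H1]; case: eqP => [->|H2] //.
  - by move=> E; move: (Ht0 y2); rewrite -E eqxx.
  - by move=> E; move: (Ht0 y1); rewrite E eqxx.
  - exact: Di.
have D'wf : forall y c, D' y = inl c -> (c < k + s)%N.
  move=> y c; rewrite /D' /Dupd; case: eqP => _; [by move=> [<-] | exact: Dwf].
have D'v : forall i', (#|[set y | blk (D' y) == i']| <= l)%N.
  move=> i'; apply: leq_trans (Dv i'); rewrite leq_eqVlt; apply/orP; left; apply/eqP.
  apply: eq_card => y; rewrite !inE /D' /Dupd; case: (eqVneq y x) => [->|//].
  by rewrite EK blk_inl.
have HN' : #|[set y | isr (D' y)]| = N.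
  move: HN; rewrite (cardsD1 x) inE EK /= add1n => -[<-].
  apply: eq_card => y; rewrite !inE /D' /Dupd; case: (eqVneq y x) => //=.
have := IH D' D'i D'wf D'v HN' => IH'.
pose get (ab : TT) : {ffun 'I_l -> F} := [ffun t => ab.2 (t, K)].
pose upd (ab : TT) (y : {ffun 'I_l -> F}) : TT :=
  (ab.1, [ffun pr => if pr.2 == K then y pr.1 else ab.2 pr]).
have := @step D x l get upd (fun t => inl (i * l + t)%N) t0.
move=> St; apply: leq_trans (St _ _ _ _ _) _.
- by move=> a y; apply/ffunP => t; rewrite !ffunE eqxx.
- by move=> [a b]; congr (_, _); apply/ffunP => -[t K']; rewrite ffunE /=; case: eqP => [->|]; rewrite ?ffunE.
- by move=> a y y'; rewrite /upd /=; congr (_, _); apply/ffunP => pr; rewrite !ffunE; case: eqP.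
- by move=> ab w; rewrite EK /=; apply: eq_bigr => t _; rewrite ffunE.
- move=> ab y t; congr (\det _); apply/matrixP => a j; rewrite !mxE /Dupd.
  case: eqP => [_|Hjx] //.
  case EJ: (D j) => [c|K'] //=; apply: eq_bigr => t1 _; rewrite ffunE /=.
  case: eqP => // EKK; exfalso; apply: Hjx; apply: Di; by rewrite EJ EK EKK.
- have Hc : ((\sum_y cost (D' y)).+1 <= \sum_y cost (D y))%N.
    rewrite (bigD1 x) //= [X in (_ <= X)%N](bigD1 x) //= EK /D' /Dupd eqxx /=.
    rewrite (eq_bigr (fun y => cost (D y))); last by move=> y /negbTE ->.
    by case: (k <= _)%N.
  apply: leq_trans (_ : (\sum_y cost (D' y)).+1 * #|{: TT}| <= _)%N; last by rewrite leq_mul2r Hc orbT.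
  by rewrite mulSn [X in (_ <= X)%N]addnC leq_add2r.
Qed.
End Desc.
Lemma card_sumb (T : finType) (P : pred T) : #|[set x | P x]| = (\sum_x (P x : nat))%N.
Proof.
rewrite -sum1_card big_mkcond /=; apply: eq_bigr => x _; rewrite inE; by case: (P x).
Qed.

Section Blocks.
Variables (m l n : nat) (r : 'I_m -> nat).
Hypothesis Hn : n = (\sum_(i < m) (l + r i))%N.

Local Notation wd i := (l + r i)%N.
Local Notation bo i := (boff l r i).
Local Notation blck i := (block n l r i).

Lemma boff_split (i i' : 'I_m) : (i <= i')%N ->
  bo i' = (bo i + \sum_(x < m | (i <= x < i')%N) wd x)%N.
Proof.
move=> Hii; rewrite /boff (bigID (fun x : 'I_m => (x < i)%N)) /=; congr (_ + _)%N.
  by apply: eq_bigl => x; case: (ltnP x i) => Hx; rewrite ?andbT ?andbF //; apply: (leq_trans Hx).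
by apply: eq_bigl => x; rewrite -leqNgt andbC.
Qed.

Lemma boff_total (i : 'I_m) :
  n = (bo i + wd i + \sum_(x < m | (i < x)%N) wd x)%N.
Proof.
rewrite Hn /boff (bigID (fun x : 'I_m => (x < i)%N)) /= -addnA; congr (_ + _)%N.
rewrite (bigD1 i) /=; last by rewrite ltnn.
congr (_ + _)%N; apply: eq_bigl => x; rewrite -leqNgt ltn_neqAle andbC.
by rewrite eq_sym -(inj_eq val_inj).
Qed.

Lemma boff_le (i : 'I_m) : (bo i + wd i <= n)%N.
Proof. by rewrite (boff_total i) leq_addr. Qed.

Lemma boff_lt (i i' : 'I_m) : (i < i')%N -> (bo i + wd i <= bo i')%N.
Proof.
move=> H; rewrite (boff_split (ltnW H)) leq_add2l (bigD1 i) /= ?leqnn ?H //.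
exact: leq_addr.
Qed.

Lemma block_uniq (j : 'I_n) (i i' : 'I_m) : j \in blck i -> j \in blck i' -> i = i'.
Proof.
rewrite !inE => /andP[a1 a2] /andP[b1 b2].
case: (ltngtP i i') => [H|H|/val_inj //].
  by have := boff_lt H; lia.
by have := boff_lt H; lia.
Qed.

Lemma boffj_lt (i : 'I_m) (t : 'I_(wd i)) : (bo i + t < n)%N.
Proof. by apply: leq_trans (boff_le i); rewrite ltn_add2l ltn_ord. Qed.

Definition boffj (i : 'I_m) (t : 'I_(wd i)) : 'I_n := Ordinal (boffj_lt t).

Lemma card_block (i : 'I_m) : #|blck i| = wd i.
Proof.
have Hinj : injective (@boffj i).
  by move=> t1 t2 /(congr1 val) /= /eqP; rewrite eqn_add2l => /eqP /val_inj.
rewrite -[RHS]card_ord -(card_imset _ Hinj); apply: eq_card => j.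
rewrite inE; apply/andP/imsetP => [[H1 H2]|[t _ ->]].
  have Ht : (j - bo i < wd i)%N by lia.
  by exists (Ordinal Ht) => //; apply: val_inj => /=; lia.
by rewrite /= leq_addr ltn_add2l ltn_ord.
Qed.

Lemma block_cover (j : 'I_n) : exists i, j \in blck i.
Proof.
pose c (j : 'I_n) := #|[set i | j \in blck i]|.
have c1 : forall j, (c j <= 1)%N.
  move=> j0; rewrite /c leqNgt; apply/negP => Hgt.
  have /card_gt0P [i1 Hi1] := ltnW Hgt.
  move: Hi1; rewrite inE => H1.
  have E1 : #|[set i | j0 \in blck i]| = 1%N.
    apply/eqP/cards1P; exists i1; apply/setP => i2; rewrite in_set in_set1.
    apply/idP/eqP => [H2|->//]; exact: (block_uniq H2 H1).
  by rewrite E1 in Hgt.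
have Hsum : (\sum_j c j = n)%N.
  rewrite /c; under eq_bigr do rewrite card_sumb.
  rewrite exchange_big /= [in RHS]Hn; apply: eq_bigr => i _.
  have := card_sumb (fun j : 'I_n => j \in blck i) => /= <-.
  by rewrite -(card_block i); apply: eq_card => x; rewrite in_set.
case: (boolP (c j == 0%N)) => [/eqP Hc|].
  exfalso; move: Hsum; rewrite (bigD1 j) //= Hc add0n => Hs.
  have : (\sum_(j0 | j0 != j) c j0 <= \sum_(j0 | j0 != j) 1)%N by apply: leq_sum => j0 _; exact: c1.
  rewrite Hs sum1_card cardC1 card_ord; have := ltn_ord j; lia.
rewrite -lt0n => /card_gt0P [i]; rewrite inE => Hi; by exists i.
Qed.

Lemma card_blocks (S : {set 'I_n}) : #|S| = (\sum_(i < m) #|S :&: blck i|)%N.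
Proof.
rewrite -sum1_card.
have E : forall j, j \in S -> (1 = \sum_(i < m) (j \in blck i))%N.
  move=> j _; have [i Hi] := block_cover j.
  rewrite (bigD1 i) //= Hi big1 // => i' Hi'; case: (boolP (j \in blck i')) => // H.
  by move/eqP: Hi'; case; exact: block_uniq H Hi.
rewrite (eq_bigr _ E) exchange_big /=; apply: eq_bigr => i _.
rewrite -sum1_card [RHS]big_mkcond [LHS]big_mkcond /=; apply: eq_bigr => j _.
by rewrite in_setI; case: (j \in S); case: (j \in blck i).
Qed.

End Blocks.
Section MDS.
Variable F : finFieldType.
Local Open Scope ring_scope.

Lemma colsub_mul1 k N e (g : 'I_e -> 'I_N) (M : 'M[F]_(k, N)) :
  colsub g M = M *m colsub g 1%:M.
Proof. by rewrite mulmx_colsub mulmx1. Qed.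

Lemma rank_colsub_le k N e (g : 'I_e -> 'I_N) (M : 'M[F]_(k, N)) :
  (\rank (colsub g M) <= \rank M)%N.
Proof. by rewrite colsub_mul1 mxrankM_maxl. Qed.

Lemma colsub_span k N e (g : 'I_e -> 'I_N) (M : 'M[F]_(k, N)) :
  (\rank M <= \rank (colsub g M))%N -> exists X : 'M[F]_(e, N), M = colsub g M *m X.
Proof.
move=> Hr.
have S1 : ((colsub g M)^T <= M^T)%MS by rewrite colsub_mul1 trmx_mul submxMl.
have S2 : (M^T <= (colsub g M)^T)%MS.
  have := mxrank_leqif_sup S1; rewrite !mxrank_tr => -[_ <-].
  by rewrite eqn_leq Hr rank_colsub_le.
have [X HX] := submxP S2.
exists X^T; apply: trmx_inj.
by rewrite trmx_mul trmxK.
Qed.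

Lemma MDS_crit k N (M : 'M[F]_(k, N)) d : (0 < d)%N -> (d <= N)%N -> (\rank M <= d)%N ->
  (forall g : 'I_d -> 'I_N, injective g -> row_full (colsub g M)) -> is_MDS M d.
Proof.
move=> d0 dN rM Hg.
pose g0 := widen_ord dN.
have g0i : injective g0 by move=> x y /(congr1 val) /= /val_inj.
have Hf0 := Hg g0 g0i.
have rkd : \rank M = d.
  apply/eqP; rewrite eqn_leq rM /=.
  by move: Hf0; rewrite /row_full => /eqP <-; exact: rank_colsub_le.
have Zlt : forall u : 'rV[F]_k, u *m M != 0 -> (#|[set j | (u *m M) 0%R j == 0%R]| < d)%N.
  move=> u Hu; rewrite ltnNge; apply/negP => HZ.
  set Z := [set j | _] in HZ.
  pose g (x : 'I_d) := nth (g0 (Ordinal d0)) (enum Z) x.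
  have gi : injective g.
    have xs : forall x : 'I_d, (x < size (enum Z))%N by move=> x; rewrite -cardE; apply: leq_trans HZ.
    move=> x y; rewrite /g => /eqP; rewrite nth_uniq ?enum_uniq ?xs //.
    by move/eqP/val_inj.
  have gZ : forall x, g x \in Z.
    by move=> x; rewrite /g -mem_enum mem_nth // -cardE; apply: leq_trans HZ.
  have Hfg := Hg g gi.
  have [X HX] : exists X : 'M[F]_(d, N), M = colsub g M *m X.
    apply: colsub_span; move: Hfg; rewrite /row_full => /eqP ->; by rewrite rkd.
  have u0 : u *m colsub g M = 0.
    rewrite mulmx_colsub; apply/matrixP => i j; rewrite [LHS]mxE [RHS]mxE.
    by have := gZ j; rewrite inE ord1 => /eqP.
  by move/eqP: Hu; apply; rewrite HX mulmxA u0 mul0mx.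
have wtE : forall u : 'rV[F]_k, wt (u *m M) = (N - #|[set j | (u *m M) 0%R j == 0%R]|)%N.
  move=> u; rewrite /wt cardsCs card_ord; congr (_ - _)%N.
  by apply: eq_card => j; rewrite !inE negbK.
apply/andP; split; first by rewrite rkd.
apply/andP; split.
  have /row_fullP [B HB] := Hf0.
  have dd : (d.-1 < d)%N by rewrite prednK.
  pose t0 := Ordinal dd.
  pose u := row t0 B.
  have Hu : forall x, (u *m M) 0 (g0 x) = (t0 == x)%:R.
    move=> x; have := congr1 (fun A : 'M[F]_d => A t0 x) HB.
    rewrite mulmx_colsub !mxE => <-; apply: eq_bigr => j _; by rewrite /u mxE.
  have uM : u *m M != 0.
    by apply/eqP => /matrixP /(_ 0 (g0 t0)); rewrite Hu eqxx mxE => /eqP; rewrite oner_eq0.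
  apply/existsP; exists u; rewrite uM /= wtE.
  have := Zlt u uM => Hlt.
  have Hge : (d.-1 <= #|[set j | (u *m M) 0%R j == 0%R]|)%N.
    have := @pigeon _ _ [set j | (u *m M) 0%R j == 0%R] (fun x : 'I_d.-1 => g0 (lift t0 x)).
    rewrite card_ord; apply.
      by move=> x y /g0i /lift_inj.
    by move=> x; rewrite inE Hu eq_sym (negbTE (neq_lift _ _)).
  apply/eqP; have := dN; move: Hlt Hge d0; rewrite -subn1; move: #|_| => z; clear; lia.
apply/forallP => u; apply/implyP => Hu; rewrite wtE.
have := Zlt u Hu; lia.
Qed.

End MDS.
Section Main.
Variable F : finFieldType.
Variables (m s l k n : nat) (r : 'I_m -> nat).
Hypothesis Hl : (1 <= l)%N.
Hypothesis Hs : (1 <= s)%N.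
Hypothesis Hk : k = (m * l - s)%N.
Hypothesis Hlk : (l <= k)%N.
Hypothesis Hn : n = (\sum_(i < m) (l + r i))%N.
Local Open Scope ring_scope.

Local Notation Key := {i : 'I_m & 'I_(r i)}.
Local Notation Desc := (nat + Key)%type.
Local Notation blck i := (block n l r i).
Local Notation bo i := (boff l r i).

Lemma Hks : (k + s = m * l)%N.
Proof. lia. Qed.

Lemma mln : (m * l <= n)%N.
Proof.
rewrite Hn; apply: leq_trans (_ : \sum_(i < m) l <= _)%N.
  by rewrite sum_nat_const card_ord.
by apply: leq_sum => i _; apply: leq_addr.
Qed.

Lemma kn : (k < n)%N.
Proof. have := mln; lia. Qed.

Definition desc (j : 'I_n) : Desc :=
  match [pick i : 'I_m | j \in blck i] with
  | Some i =>
      let c := (j - bo i)%N in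
      if (c < l)%N then inl (i * l + c)%N
      else if @insub _ (fun x => x < r i)%N 'I_(r i) (c - l)%N is Some jj
           then inr (@Tagged 'I_m i (fun i => 'I_(r i)) jj) else inl 0%N
  | None => inl 0%N
  end.

Lemma pick_block (j : 'I_n) (i : 'I_m) : j \in blck i -> [pick i : 'I_m | j \in blck i] = Some i.
Proof.
move=> Hi; case: pickP => [i' Hi'|H]; last by move: (H i); rewrite Hi.
by rewrite (block_uniq Hn Hi' Hi).
Qed.

Lemma descE (j : 'I_n) (i : 'I_m) : j \in blck i ->
  exists2 c, (c < l + r i)%N & (j = bo i + c :> nat)%N /\
   desc j = if (c < l)%N then inl (i * l + c)%N
            else if @insub _ (fun x => x < r i)%N 'I_(r i) (c - l)%N is Some jj
                 then inr (@Tagged 'I_m i (fun i => 'I_(r i)) jj) else inl 0%N.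
Proof.
move=> Hi; rewrite /desc (pick_block Hi) /=.
have := Hi; rewrite inE => /andP [H1 H2].
exists (j - bo i)%N; first by lia.
by split; first by lia.
Qed.

Lemma desc_blk (j : 'I_n) (i : 'I_m) : j \in blck i -> blk l (desc j) = i.
Proof.
move=> Hi; have [c Hc [Ej ->]] := descE Hi.
case: ltnP => Hcl; first by rewrite blk_inl.
by case: insubP => [jj _ _ //|]; rewrite ltn_subLR // Hc.
Qed.

Lemma desc_wf (j : 'I_n) c : desc j = inl c -> (c < k + s)%N.
Proof.
have [i Hi] := block_cover Hn j.
have [c0 Hc [Ej ->]] := descE Hi.
case: ltnP => Hcl.
  move=> [<-]; rewrite Hks; have := leq_mul (ltn_ord i) (leqnn l); rewrite mulSn; lia.
by case: insubP => [jj _ _ //|]; rewrite ltn_subLR // Hc.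
Qed.

Lemma desc_inj : injective desc.
Proof.
move=> j1 j2 E.
have [i1 H1] := block_cover Hn j1; have [i2 H2] := block_cover Hn j2.
have ei : i1 = i2 by apply: val_inj; rewrite /= -(desc_blk H1) -(desc_blk H2) E.
subst i2.
have [c1 Hc1 [E1 D1]] := descE H1; have [c2 Hc2 [E2 D2]] := descE H2.
apply: val_inj; rewrite /= E1 E2; congr (_ + _)%N.
move: E; rewrite D1 D2.
case: (ltnP c1 l) => l1; case: (ltnP c2 l) => l2.
- by move=> [] /eqP; rewrite eqn_add2l => /eqP.
- case: insubP => [jj _ _ //|]; last by rewrite ltn_subLR // Hc2.
- case: insubP => [jj _ _ //|]; last by rewrite ltn_subLR // Hc1.
- case: insubP => [jj1 _ V1|]; last by rewrite ltn_subLR // Hc1.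
  case: insubP => [jj2 _ V2|]; last by rewrite ltn_subLR // Hc2.
  move=> [] /(congr1 (fun K : Key => val (tagged K))) /=.
  rewrite V1 V2 => H; lia.
Qed.

Local Notation AT := {ffun 'I_k * 'I_s -> F}.
Local Notation BT := {ffun 'I_l * Key -> F}.
Local Notation TT := (AT * BT)%type.
Local Notation G ab := (@Gmat F k s n m l r ab.1 ab.2).

Lemma Gmat_desc (ab : TT) w j : G ab w j = colv (desc j) ab w.
Proof.
have [i Hi] := block_cover Hn j.
rewrite /Gmat mxE /desc (pick_block Hi) /=.
case: ltnP => Hc //.
have := Hi; rewrite inE => /andP [H1 H2].
case: insubP => [jj _ Ejj|]; last by rewrite ltn_subLR // ltn_subLR //; lia.
done.
Qed.

Lemma MD_G (D : 'I_k -> 'I_n) (ab : TT) : MD (fun x => desc (D x)) ab = colsub D (G ab).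
Proof. by apply/matrixP => w x; rewrite mxE -Gmat_desc [RHS]mxE. Qed.
Definition coef (d : Desc) (ab : TT) (t : 'I_l) : F :=
  match d with inl c => ((c %% l)%N == t)%:R | inr K => ab.2 (t, K) end.

Lemma colv_coef (j : 'I_n) (i : 'I_m) (ab : TT) w : j \in blck i ->
  colv (desc j) ab w = \sum_(t < l) coef (desc j) ab t * cv ab.1 (i * l + t) w.
Proof.
move=> Hi; have [c Hc [Ej ->]] := descE Hi.
case: ltnP => Hcl.
  rewrite /= (bigD1 (Ordinal Hcl)) //= modnMDl modn_small // eqxx mul1r big1 ?addr0 //.
  move=> t Ht; case: eqP => [E|]; last by rewrite mul0r.
  by case/eqP: Ht; apply: val_inj; rewrite /= -E.
by case: insubP => [jj _ _ //|]; rewrite ltn_subLR // Hc.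
Qed.

Lemma rank_block (ab : TT) (i : 'I_m) : (\rank (colsub_set (blck i) (G ab)) <= l)%N.
Proof.
pose Cm : 'M[F]_(k, l) := \matrix_(w, t) cv ab.1 (i * l + t) w.
pose Xm : 'M[F]_(l, #|blck i|) := \matrix_(t, y) coef (desc (enum_val y)) ab t.
have -> : colsub_set (blck i) (G ab) = Cm *m Xm.
  apply/matrixP => w y; rewrite /colsub_set [LHS]mxE Gmat_desc !mxE.
  rewrite (colv_coef _ _ (enum_valP y)); apply: eq_bigr => t _.
  by rewrite !mxE mulrC.
by apply: leq_trans (mxrankM_maxl _ _) (rank_leq_col _).
Qed.

Lemma n_gt0 : (0 < n)%N.
Proof. have := kn; lia. Qed.

Definition j0 : 'I_n := Ordinal n_gt0.

Definition fS (S : {set 'I_n}) (x : 'I_k) : 'I_n := nth j0 (enum S) x.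

Lemma fS_lt (S : {set 'I_n}) (x : 'I_k) : #|S| = k -> (x < size (enum S))%N.
Proof. by move=> HS; rewrite -cardE HS ltn_ord. Qed.

Lemma fS_inj (S : {set 'I_n}) : #|S| = k -> injective (fS S).
Proof.
move=> HS x y; rewrite /fS => /eqP; rewrite nth_uniq ?enum_uniq ?fS_lt //.
by move/eqP/val_inj.
Qed.

Lemma fS_mem (S : {set 'I_n}) x : #|S| = k -> fS S x \in S.
Proof. by move=> HS; rewrite /fS -mem_enum mem_nth ?fS_lt. Qed.

Lemma fS_onto (S : {set 'I_n}) j : #|S| = k -> j \in S -> exists x, fS S x = j.
Proof.
move=> HS Hj.
have Hx : (index j (enum S) < k)%N by rewrite -HS cardE index_mem mem_enum.
by exists (Ordinal Hx); rewrite /fS nth_index ?mem_enum.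
Qed.

Definition validS (S : {set 'I_n}) := [forall i : 'I_m, #|S :&: blck i| <= l]%N.

Lemma extend_valid d : forall U, validS U -> (k - #|U| = d)%N -> (#|U| <= k)%N ->
  exists S, [/\ validS S, U \subset S & #|S| = k].
Proof.
elim: d => [|d IH] U HU Hd Hle.
  by exists U; split => //; apply/eqP; rewrite eqn_leq Hle -subn_eq0 Hd.
have [i Hi] : exists i : 'I_m, (#|U :&: blck i| < l)%N.
  case: (boolP [exists i : 'I_m, #|U :&: blck i| < l]%N) => [/existsP //|/negP H].
  exfalso.
  have : (m * l <= #|U|)%N.
    rewrite (card_blocks Hn); apply: leq_trans (_ : \sum_(i < m) l <= _)%N.
      by rewrite sum_nat_const card_ord.
    apply: leq_sum => i _; rewrite leqNgt; apply/negP => Hlt; apply: H.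
    by apply/existsP; exists i.
  move=> H1; move: Hle Hk Hs H1 Hlk Hl; clear; lia.
have [j Hj] : exists j, j \in blck i :\: U.
  apply/set0Pn; rewrite -card_gt0 cardsD (card_block Hn).
  have : (#|blck i :&: U| < l)%N by rewrite setIC.
  lia.
move: Hj; rewrite inE => /andP [HjU Hji].
have HV : validS (j |: U).
  apply/forallP => i'; rewrite setIUl.
  case: (eqVneq i' i) => [->|ne].
    rewrite cardsU.
    have : (#|[set j] :&: blck i| <= 1)%N by rewrite -(cards1 j); apply/subset_leq_card/subsetIl.
    move: Hi; lia.
  rewrite (_ : [set j] :&: blck i' = set0) ?set0U; first by move/forallP: HU.
  apply/setP => j'; rewrite in_setI in_set1 in_set0; apply/negP => /andP [/eqP -> Hj'].
  by case/eqP: ne; apply: (block_uniq Hn Hj' Hji).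
have Hd' : (k - #|j |: U| = d)%N by rewrite cardsU1 HjU; lia.
have Hle' : (#|j |: U| <= k)%N by rewrite cardsU1 HjU; lia.
have [S [HS1 HS2 HS3]] := IH _ HV Hd' Hle'.
by exists S; split => //; apply: subset_trans HS2; apply: subsetUr.
Qed.
Definition goodP (M : 'M[F]_(k, n)) :=
  forall S : {set 'I_n}, #|S| = k -> validS S -> \det (colsub (fS S) M) != 0.

Lemma rowfull_colsub_comp e e' (A : 'M[F]_(k, e)) (h : 'I_e' -> 'I_e) :
  row_full A -> injective h -> row_full (colsub h A).
Proof.
move=> /row_fullP [B HB] hi; apply/row_fullP.
exists (rowsub h B); apply/matrixP => x y.
have := congr1 (fun M : 'M[F]_e => M (h x) (h y)) HB; rewrite !mxE (inj_eq hi) => <-.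
by apply: eq_bigr => w _; rewrite !mxE.
Qed.

Lemma rowfull_sub (M : 'M[F]_(k, n)) : goodP M ->
  forall e (g : 'I_e -> 'I_n), injective g -> (e <= k)%N ->
  (forall i, #|[set x | g x \in blck i]| <= l)%N -> row_full (colsub g M).
Proof.
move=> HG e g gi ek gv.
pose U := g @: [set: 'I_e].
have HU : #|U| = e by rewrite card_imset // cardsT card_ord.
have UV : validS U.
  apply/forallP => i; apply: leq_trans (gv i).
  rewrite -(card_imset _ gi); apply: subset_leq_card; apply/subsetP => j.
  rewrite in_setI => /andP [/imsetP [x _ ->] Hx]; apply/imsetP; exists x => //.
  by rewrite inE.
have [S [SV US HS]] := extend_valid UV erefl (etrans (congr1 (fun z => z <= k)%N HU) ek).
have Hf : row_full (colsub (fS S) M) by rewrite row_full_unit unitmxE unitfE HG.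
have gS : forall x, g x \in S by move=> x; apply: (subsetP US); apply: imset_f.
pose h (x : 'I_e) : 'I_k := odflt (Ordinal (leq_trans (ltn_ord x) ek))
   [pick y | fS S y == g x].
have hE : forall x, fS S (h x) = g x.
  move=> x; rewrite /h; case: pickP => [y /eqP //|H].
  have [y Hy] := fS_onto HS (gS x); by move: (H y); rewrite Hy eqxx.
have hi : injective h by move=> x y E; apply: gi; rewrite -!hE E.
have -> : colsub g M = colsub h (colsub (fS S) M).
  by apply/matrixP => w x; rewrite !mxE hE.
exact: rowfull_colsub_comp.
Qed.
Lemma colsub_set_comp N (X : {set 'I_n}) (M : 'M[F]_(k, n)) (g : 'I_N -> 'I_#|X|) :
  colsub g (colsub_set X M) = colsub (fun x => enum_val (g x)) M.
Proof. by apply/matrixP => w x; rewrite !mxE. Qed.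

Lemma PMDS_of (M : 'M[F]_(k, n)) : goodP M ->
  (forall i, \rank (colsub_set (blck i) M) <= l)%N -> @is_PMDS F k n m l r M.
Proof.
move=> HG Hr.
have Hsub := rowfull_sub HG.
apply/and5P; split.
- by rewrite Hn.
- exact: kn.
- have V0 : validS set0 by apply/forallP => i; rewrite set0I cards0.
  have c0 : (#|@set0 'I_n| <= k)%N by rewrite cards0.
  have [S [SV _ HS]] := extend_valid V0 erefl c0.
  have Hf : row_full (colsub (fS S) M) by rewrite row_full_unit unitmxE unitfE HG.
  rewrite eqn_leq rank_leq_row /=.
  by move: Hf; rewrite /row_full => /eqP {1}<-; apply: rank_colsub_le.
- apply/forallP => i; apply: MDS_crit => //.
  + by rewrite (card_block Hn) leq_addr.
  + move=> g gi; rewrite colsub_set_comp; apply: Hsub => //.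
    * by move=> x y /enum_val_inj /gi.
    * by move=> i'; apply: leq_trans (max_card _) _; rewrite card_ord.
- apply/forallP => E; apply/implyP => /forallP HE.
  have HX : forall i, #|~: E :&: blck i| = l.
    move=> i; have := cardsID E (blck i); rewrite (card_block Hn) setIC (eqP (HE i)).
    rewrite setDE setIC; lia.
  have cX : #|~: E| = (m * l)%N.
    rewrite (card_blocks Hn) (eq_bigr (fun _ => l)); last by move=> i _; exact: HX.
    by rewrite sum_nat_const card_ord.
  apply: MDS_crit => //.
  + by apply: leq_trans Hlk.
  + by rewrite cX -Hks leq_addr.
  + exact: rank_leq_row.
  + move=> g gi; rewrite colsub_set_comp; apply: Hsub => //.
    * by move=> x y /enum_val_inj /gi.
    move=> i; apply: leq_trans (_ : _ <= #|~: E :&: blck i|)%N _; last by rewrite HX.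
    have ei : injective (fun x => enum_val (g x)) by move=> x y /enum_val_inj /gi.
    rewrite -(card_imset _ ei); apply: subset_leq_card; apply/subsetP => j /imsetP [x].
    by rewrite inE => Hx ->; rewrite in_setI Hx enum_valP.
Qed.
Lemma union_bound (T I : finType) (A : {set T}) (P : {set I}) (B : I -> {set T}) :
  (forall a, a \in A -> exists2 S, S \in P & a \in B S) ->
  (#|A| <= \sum_(S in P) #|B S|)%N.
Proof.
move=> H.
have E : forall S, #|B S| = (\sum_a (a \in B S : nat))%N.
  by move=> S; rewrite -card_sumb; apply: eq_card => a; rewrite inE.
rewrite (eq_bigr _ (fun S _ => E S)) exchange_big /=.
rewrite -sum1_card big_mkcond /=; apply: leq_sum => a _.
case: ifP => // Ha; have [S HS HaS] := H a Ha.
by rewrite (bigD1 S) //= HaS.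
Qed.

Lemma sum_fS (S : {set 'I_n}) (c : 'I_n -> nat) : #|S| = k ->
  (\sum_(x < k) c (fS S x) = \sum_(j in S) c j)%N.
Proof.
move=> HS.
have Eim : fS S @: [set: 'I_k] = S.
  apply/eqP; rewrite eqEcard card_imset ?cardsT ?card_ord ?HS ?leqnn ?andbT; last exact: fS_inj.
  by apply/subsetP => j /imsetP [x _ ->]; apply: fS_mem.
rewrite [RHS](eq_bigl (fun j => j \in fS S @: [set: 'I_k])); last by move=> j; rewrite Eim.
rewrite big_imset /=; last by move=> x y _ _; apply: fS_inj.
by apply: eq_bigl => x; rewrite inE.
Qed.

Lemma count_sets_with (j : 'I_n) :
  (#|[set S : {set 'I_n} | (#|S| == k) && (j \in S)]| <= 'C(n.-1, k.-1))%N.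
Proof.
have Hk0 : (0 < k)%N by apply: leq_trans Hlk.
rewrite -[n in 'C(n.-1, _)]card_ord -(cardsC1 j) -cards_draws.
pose f (S : {set 'I_n}) := S :\ j.
rewrite -(card_in_imset (f := f)).
  apply: subset_leq_card; apply/subsetP => S' /imsetP [S].
  rewrite inE => /andP [/eqP HS HjS] ->; rewrite inE; apply/andP; split.
    by apply/subsetP => x; rewrite !inE => /andP [-> _].
  by move: HS; rewrite /f (cardsD1 j S) HjS add1n => <-.
move=> S1 S2; rewrite !inE => /andP [_ H1] /andP [_ H2] E.
by rewrite -(setD1K H1) -(setD1K H2); congr (_ |: _); exact: E.
Qed.
Definition isid (d : Desc) : bool := match d with inl c => (c < k)%N | inr _ => false end.

Lemma desc_id_exists (c : 'I_k) : exists j, desc j = inl (c : nat).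
Proof.
have Hc : (c < m * l)%N by rewrite -Hks; apply: ltn_addr.
have Hi : (c %/ l < m)%N by rewrite ltn_divLR.
pose i := Ordinal Hi.
have Ht : (c %% l < l)%N by rewrite ltn_mod.
have Hj : (bo i + c %% l < n)%N.
  apply: leq_trans (boff_le Hn i); rewrite ltn_add2l; apply: leq_trans Ht _; exact: leq_addr.
pose j := Ordinal Hj.
have ji : j \in blck i by rewrite inE /= leq_addr /= ltn_add2l; apply: leq_trans Ht _; exact: leq_addr.
exists j; have [c0 Hc0 [Ej ->]] := descE ji.
have -> : c0 = (c %% l)%N by move: Ej => /= /eqP; rewrite eqn_add2l => /eqP.
by rewrite Ht /= -divn_eq.
Qed.

Lemma card_id : (k <= #|[set j | isid (desc j)]|)%N.
Proof.
pose f (c : 'I_k) := odflt j0 [pick j | desc j == inl (c : nat)].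
have fE : forall c, desc (f c) = inl (c : nat).
  move=> c; rewrite /f; case: pickP => [j /eqP //|H].
  have [j Hj] := desc_id_exists c; by move: (H j); rewrite Hj eqxx.
rewrite -[X in (X <= _)%N]card_ord; apply: (@pigeon _ _ _ f).
  by move=> c1 c2 E; apply: val_inj; move: (fE c1) (fE c2); rewrite E => -> [].
by move=> c; rewrite inE fE /= ltn_ord.
Qed.

Lemma cost_sum : (\sum_j cost k (desc j) <= 2 * (n - k))%N.
Proof.
apply: leq_trans (_ : \sum_j (2 * (~~ isid (desc j)))%N <= _)%N.
  apply: leq_sum => j _; case: (desc j) => [c|K] //=.
  by case: ltnP.
rewrite -big_distrr /= leq_mul2l; apply/orP; right.
have := card_id; rewrite (card_sumb (fun j => isid (desc j))) => H.
have : (\sum_(j < n) (isid (desc j) : nat) + \sum_j (~~ isid (desc j) : nat) = n)%N.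
  rewrite -big_split /= -[RHS]card_ord -sum1_card; apply: eq_bigr => j _.
  by case: (isid _).
move: H; set a := (\sum_(j < n) _)%N; set b := (\sum_(j < n) _)%N; move: a b; clear; lia.
Qed.
Lemma badS_bound (S : {set 'I_n}) : #|S| = k -> validS S ->
  (#|[set ab : TT | \det (colsub (fS S) (G ab)) == 0%R]| * #|F| <=
   (\sum_(x < k) cost k (desc (fS S x))) * #|{: TT}|)%N.
Proof.
move=> HS SV.
have -> : [set ab : TT | \det (colsub (fS S) (G ab)) == 0] = bad F s l (fun x => desc (fS S x)).
  by apply/setP => ab; rewrite !inE MD_G.
apply: (@lemmaB F m s l k r Hl Hks #|[set y | isr (desc (fS S y))]|) => //.
- by move=> x y /desc_inj /(fS_inj HS).
- by move=> x c; apply: desc_wf.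
- move=> i.
  case: (set_0Vmem [set y | blk l (desc (fS S y)) == i]) => [->|[y0]]; first by rewrite cards0.
  rewrite inE => /eqP Hy0.
  have [io Hio] := block_cover Hn (fS S y0).
  apply: leq_trans (_ : #|S :&: blck io| <= l)%N; last by move/forallP: SV.
  have fi := fS_inj HS.
  rewrite -(card_imset _ fi); apply: subset_leq_card; apply/subsetP => j /imsetP [y].
  rewrite inE => /eqP Hy ->; rewrite in_setI fS_mem //=.
  have [iy Hiy] := block_cover Hn (fS S y).
  have : iy = io.
    by apply: val_inj; rewrite /= -(desc_blk Hiy) -(desc_blk Hio) Hy Hy0.
  by move=> <-.
Qed.

Lemma total_bound :
  (#|[set ab : TT | ~~ @is_PMDS F k n m l r (G ab)]| * #|F| <=
   2 * (n - k) * 'C(n.-1, k.-1) * #|{: TT}|)%N.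
Proof.
pose P := [set S : {set 'I_n} | (#|S| == k) && validS S].
pose B (S : {set 'I_n}) := [set ab : TT | \det (colsub (fS S) (G ab)) == 0].
have U : (#|[set ab : TT | ~~ @is_PMDS F k n m l r (G ab)]| <= \sum_(S in P) #|B S|)%N.
  apply: union_bound => ab; rewrite inE => HnP.
  case: (boolP [exists S : {set 'I_n}, (#|S| == k) && validS S && (\det (colsub (fS S) (G ab)) == 0)]).
    by move/existsP => [S /andP [HP HB]]; exists S; rewrite inE.
  move=> /existsPn H; exfalso; move/negP: HnP; apply; apply: PMDS_of; last exact: rank_block.
  move=> S HS SV; move: (H S); rewrite HS eqxx SV /=; by [].
apply: leq_trans (leq_mul U (leqnn _)) _.
rewrite big_distrl /=.
apply: leq_trans (_ : \sum_(S in P) ((\sum_(x < k) cost k (desc (fS S x))) * #|{: TT}|) <= _)%N.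
  apply: leq_sum => S; rewrite inE => /andP [/eqP HS SV]; exact: badS_bound.
rewrite -big_distrl /= leq_mul2r; apply/orP; right.
apply: leq_trans (_ : \sum_(S in P) (\sum_(j in S) cost k (desc j)) <= _)%N.
  by rewrite leq_eqVlt; apply/orP; left; apply/eqP; apply: eq_bigr => S; rewrite inE => /andP [/eqP HS _]; apply: sum_fS.
apply: leq_trans (_ : \sum_(S : {set 'I_n} | #|S| == k) (\sum_(j in S) cost k (desc j)) <= _)%N.
  rewrite [X in (_ <= X)%N](bigID (fun S => S \in P)) /=.
  apply: leq_trans (leq_addr _ _); rewrite leq_eqVlt; apply/orP; left; apply/eqP.
  by apply: eq_bigl => S; rewrite inE; case: (#|S| == k); rewrite ?andbT ?andbF.
under eq_bigr do rewrite big_mkcond /=.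
rewrite exchange_big /=.
apply: leq_trans (_ : \sum_j (cost k (desc j) * 'C(n.-1, k.-1)) <= _)%N.
  apply: leq_sum => j _.
  rewrite (eq_bigr (fun S : {set 'I_n} => cost k (desc j) * (j \in S))%N); last first.
    by move=> S _; case: (j \in S); rewrite ?muln1 ?muln0.
  rewrite -big_distrr /= leq_mul2l; apply/orP; right.
  apply: leq_trans (count_sets_with j); rewrite -big_mkcondr /=.
  rewrite (card_sumb (fun S : {set 'I_n} => (#|S| == k) && (j \in S))) big_mkcond /=.
  rewrite leq_eqVlt; apply/orP; left; apply/eqP; apply: eq_bigr => S _.
  by case: (#|S| == k); case: (j \in S).
rewrite -big_distrl /= leq_mul2r; apply/orP; right; exact: cost_sum.
Qed.
End Main.

Unset Implicit Arguments.

Theorem theorem20 (F : finFieldType) (m s l k n : nat) (r : 'I_m -> nat) :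
  (2 <= m)%N -> (1 <= s)%N -> (1 <= l)%N -> (forall i, 1 <= r i)%N ->
  k = (m * l - s)%N -> (l <= k)%N -> n = (\sum_(i < m) (l + r i))%N ->
  1 - ((2 * (n - k) * 'C(n.-1, k.-1))%:R / #|F|%:R : rat) <=
  prob (fun ab : {ffun 'I_k * 'I_s -> F} *
                 {ffun 'I_l * {i : 'I_m & 'I_(r i)} -> F} =>
          @is_PMDS F k n m l r (@Gmat F k s n m l r ab.1 ab.2)).
Proof.
move=> Hm Hs Hl Hr Hk Hlk Hn.
have TB := @total_bound F m s l k n r Hl Hs Hk Hlk Hn.
rewrite /prob.
set P := (fun ab : {ffun 'I_k * 'I_s -> F} * {ffun 'I_l * {i : 'I_m & 'I_(r i)} -> F} =>
          @is_PMDS F k n m l r (@Gmat F k s n m l r ab.1 ab.2)).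
set T := ({ffun 'I_k * 'I_s -> F} * {ffun 'I_l * {i : 'I_m & 'I_(r i)} -> F})%type.
set X := (2 * (n - k) * 'C(n.-1, k.-1))%N in TB *.
set g := #|[set x : T | P x]|.
set b := #|[set x : T | ~~ P x]| in TB.
have Hgb : (g + b = #|{: T}|)%N.
  rewrite /g /b -(cardsC [set x : T | P x]); congr (_ + _)%N.
  by apply: eq_card => x; rewrite !inE.
have Ht : (0 < #|{: T}|)%N.
  by apply/card_gt0P; exists ([ffun=> 0], [ffun=> 0]).
have Hq : (0 < #|F|)%N by apply/card_gt0P; exists 0.
have Hq' : (0 : rat) < #|F|%:R by rewrite ltr0n.
have Ht' : (0 : rat) < #|{: T}|%:R by rewrite ltr0n.
have -> : g = (#|{: T}| - b)%N by rewrite -Hgb addnK.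
have Hbt : (b <= #|{: T}|)%N by rewrite -Hgb leq_addl.
rewrite natrB // mulrBl divff ?lt0r_neq0 //.
rewrite lerD2l lerN2.
rewrite ler_pdivrMr // mulrAC ler_pdivlMr //.
by rewrite -!natrM ler_nat.
Qed.
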